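(* Let $n\ge 2$ and let $x=(x_1,\dots,x_n)$, $y=(y_1,\dots,y_n)$, $w=(w_1,\dots,w_n)$ be three bases of the free group $F_n$. Suppose there exists $v\in F_n$ such that $x_i=vw_iv^{-1}$ for all $i\in\{1,\dots,n\}$. Then $|v|_y\le |w|_y^2\,|y|_x$.
   Context: For a basis $x$ of $F_n$ and $u\in F_n$, $|u|_x$ denotes the length of the reduced word representing $u$ in the basis $x$. For two bases $x,y$ of $F_n$, $|y|_x=\max_i |y_i|_x$ is the maximal length of an element of $y$ written in the basis $x$. *)

(* Defs.v *)
(* The free group F_n is modelled by words over the alphabet
   {x_0,...,x_{n-1}}^{+-1}; two words represent the same element of F_n iff
   their free reductions (fnorm) coincide. *)
From Stdlib Require Import ClassicalEpsilon.
From mathcomp Require Import all_boot.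
Set Implicit Arguments. Unset Strict Implicit. Unset Printing Implicit Defensive.

(* a letter (i, b): generator i, inverted iff b = true *)
Definition letter (n : nat) : Type := ('I_n * bool)%type.
Definition word (n : nat) : Type := seq (letter n).

Definition inv_letter n (a : letter n) : letter n := (a.1, ~~ a.2).

Definition winv n (s : word n) : word n := rev (map (@inv_letter n) s).

Definition cons_red n (a : letter n) (s : word n) : word n :=
  match s with
  | b :: t => if b == inv_letter a then t else a :: s
  | [::] => [:: a]
  end.

Definition fnorm n (s : word n) : word n := foldr (@cons_red n) [::] s.

Definition weval n (x : 'I_n -> word n) (s : word n) : word n :=
  flatten (map (fun a : letter n => if a.2 then winv (x a.1) else x a.1) s).

(* x = (x_1,...,x_n) is a basis of F_n: the endomorphism of F_n sending the
   i-th standard generator to x_i is bijective *)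
Definition is_basis n (x : 'I_n -> word n) : Prop :=
  (forall u : word n, exists s : word n, fnorm (weval x s) = fnorm u) /\
  (forall s t : word n, fnorm (weval x s) = fnorm (weval x t) -> fnorm s = fnorm t).

Definition writable_len n (x : 'I_n -> word n) (u : word n) (k : nat) : bool :=
  [exists t : k.-tuple (letter n), fnorm (weval x t) == fnorm u].

(* |u|_x : the least length of a word in x representing u, i.e. the length of
   the reduced word representing u in the basis x (0 if x is not generating) *)
Definition wlen n (x : 'I_n -> word n) (u : word n) : nat :=
  match excluded_middle_informative (exists k, writable_len x u k) with
  | left H => ex_minn H
  | right _ => 0
  end.

Definition blen n (x y : 'I_n -> word n) : nat := \max_(i < n) wlen x (y i).

(* Main.v *)
Require Import Defs.
From mathcomp Require Import all_boot.
From Stdlib Require Import Setoid Morphisms ClassicalEpsilon.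
Set Implicit Arguments. Unset Strict Implicit.

Section F.
Variable n : nat.
Implicit Types (a b : letter n) (s t r : word n).

Definition erel : rel (letter n) := fun a b => b != inv_letter a.
Definition reduced (s : word n) := sorted erel s.

Lemma inv_letterK a : inv_letter (inv_letter a) = a.
Proof. by case: a => i b; rewrite /inv_letter /= negbK. Qed.

Lemma inv_letter_inj : injective (@inv_letter n).
Proof. exact: can_inj inv_letterK. Qed.

Definition act s r := foldr (@cons_red n) r s.

Lemma fnorm_cat s t : fnorm (s ++ t) = act s (fnorm t).
Proof. by rewrite /fnorm /act foldr_cat. Qed.

Lemma cons_red_reduced a r : reduced r -> reduced (cons_red a r).
Proof.
rewrite /reduced; case: r => [|b r] //= H.
case: eqP => [_|ne]; first exact: path_sorted H.
by rewrite /= H andbT /erel; apply/eqP.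
Qed.

Lemma act_reduced s r : reduced r -> reduced (act s r).
Proof. by elim: s => //= a s IH H; apply: cons_red_reduced; apply: IH. Qed.

Lemma fnorm_reduced s : reduced (fnorm s).
Proof. exact: act_reduced. Qed.

Lemma cons_redK a r : reduced r -> cons_red a (cons_red (inv_letter a) r) = r.
Proof.
case: r => [|c r] /= H.
  by rewrite eqxx.
rewrite inv_letterK; case: eqP => [E|ne].
  subst c; case: r H => [|d r] //= /andP [H1 _].
  by rewrite /erel in H1; rewrite (negbTE H1).
by rewrite /= eqxx.
Qed.

Lemma act_cons_red a r R : reduced r -> reduced R ->
  act (cons_red a r) R = cons_red a (act r R).
Proof.
case: r => [|b r] //= Hr HR.
case: eqP => [->|//].
by rewrite cons_redK //; apply: act_reduced.
Qed.

Lemma fnorm_cons a s : fnorm (a :: s) = cons_red a (fnorm s).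
Proof. by []. Qed.

Lemma act_fnorm s R : reduced R -> act s R = act (fnorm s) R.
Proof.
move=> HR; elim: s => //= a s IH.
by rewrite IH act_cons_red // fnorm_reduced.
Qed.

Lemma reduced_fnorm r : reduced r -> fnorm r = r.
Proof.
elim: r => //= a r IH H.
rewrite IH; last exact: path_sorted H.
case: r H {IH} => [|b r] //= /andP [H1 _].
by rewrite /erel in H1; rewrite (negbTE H1).
Qed.

Lemma fnormK s : fnorm (fnorm s) = fnorm s.
Proof. exact/reduced_fnorm/fnorm_reduced. Qed.

Lemma fnorm_catE s t : fnorm (s ++ t) = fnorm (fnorm s ++ fnorm t).
Proof.
rewrite !fnorm_cat fnormK; apply: act_fnorm; exact: fnorm_reduced.
Qed.

Lemma size_fnorm s : size (fnorm s) <= size s.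
Proof.
elim: s => //= a s IH.
case: (fnorm s) IH => [|b r] //= IH.
by case: eqP => _ /=; [apply: leq_trans (leqnSn _) _ | ]; apply: leq_trans IH _.
Qed.

Definition eqw s t := fnorm s = fnorm t.

Global Instance eqw_equiv : Equivalence eqw.
Proof. split; rewrite /eqw; congruence. Qed.

Global Instance cat_proper : Proper (eqw ==> eqw ==> eqw) (@cat (letter n)).
Proof. by move=> s s' Hs t t' Ht; rewrite /eqw fnorm_catE Hs Ht -fnorm_catE. Qed.

Lemma winv_cat s t : winv (s ++ t) = winv t ++ winv s.
Proof. by rewrite /winv map_cat rev_cat. Qed.

Lemma winvK s : winv (winv s) = s.
Proof. by rewrite /winv map_rev revK -map_comp map_id_in // => a _; apply: inv_letterK. Qed.

Lemma size_winv s : size (winv s) = size s.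
Proof. by rewrite /winv size_rev size_map. Qed.

Lemma winv_cons a s : winv (a :: s) = winv s ++ [:: inv_letter a].
Proof. by rewrite /winv /= rev_cons cats1. Qed.

Lemma catV s : eqw (s ++ winv s) [::].
Proof.
rewrite /eqw; elim: s => //= a s IH.
rewrite winv_cons catA fnorm_catE IH /=.
by rewrite /= eqxx.
Qed.

Lemma catVl s : eqw (winv s ++ s) [::].
Proof. by rewrite -{2}(winvK s) catV. Qed.

Global Instance winv_proper : Proper (eqw ==> eqw) (@winv n).
Proof.
move=> s t H.
transitivity (winv s ++ (t ++ winv t)).
  by rewrite catV cats0.
rewrite catA.
transitivity (([::] : word n) ++ winv t); last by [].
apply: cat_proper; last by [].
rewrite /eqw fnorm_catE -H -fnorm_catE; exact: catVl.
Qed.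


Definition img (x : 'I_n -> word n) a := if a.2 then winv (x a.1) else x a.1.

Lemma weval_cons x a s : weval x (a :: s) = img x a ++ weval x s.
Proof. by []. Qed.

Lemma weval_cat x s t : weval x (s ++ t) = weval x s ++ weval x t.
Proof. by rewrite /weval map_cat flatten_cat. Qed.

Lemma img_inv x a : img x (inv_letter a) = winv (img x a).
Proof. by case: a => i [] /=; rewrite /img /= ?winvK. Qed.

Lemma weval_winv x s : weval x (winv s) = winv (weval x s).
Proof.
elim: s => //= a s IH.
rewrite winv_cons weval_cat IH weval_cons winv_cat.
by rewrite /weval /= cats0 -/(img x (inv_letter a)) img_inv.
Qed.

Lemma eqw_refl s : eqw s s. Proof. by []. Qed.

Lemma weval_fnorm x s : eqw (weval x s) (weval x (fnorm s)).
Proof.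
elim: s => // a s IH.
rewrite weval_cons fnorm_cons IH.
case E: (fnorm s) => [|b r] //=.
case: eqP => [Eb|_] //.
rewrite weval_cons Eb img_inv catA.
transitivity (([::] : word n) ++ weval x r); last by [].
apply: cat_proper; [exact: catV | exact: eqw_refl].
Qed.

Lemma weval_eqw x s t : fnorm s = fnorm t -> eqw (weval x s) (weval x t).
Proof. by move=> H; rewrite weval_fnorm H -weval_fnorm. Qed.

Lemma weval_ext x x' s : (forall i, eqw (x i) (x' i)) -> eqw (weval x s) (weval x' s).
Proof.
move=> H; elim: s => // a s IH.
rewrite !weval_cons IH /img; case: a.2; rewrite H //.
Qed.

Lemma weval_comp y U s : weval y (weval U s) = weval (fun i => weval y (U i)) s.
Proof.
elim: s => // a s IH.
by rewrite !weval_cons weval_cat IH /img; case: a.2; rewrite ?weval_winv.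
Qed.

Lemma size_weval U A s : (forall i, size (U i) <= A) -> size (weval U s) <= size s * A.
Proof.
move=> H; elim: s => // a s IH.
rewrite weval_cons size_cat mulSn leq_add //.
by rewrite /img; case: a.2; rewrite ?size_winv H.
Qed.

Lemma weval_conj f g c s : (forall i, eqw (f i) (c ++ g i ++ winv c)) ->
  eqw (weval f s) (c ++ weval g s ++ winv c).
Proof.
move=> H; elim: s => [|a s IH] /=.
  by rewrite catV.
rewrite !weval_cons IH.
have Ha : eqw (img f a) (c ++ img g a ++ winv c).
  rewrite /img; case: a.2; rewrite H //.
  by rewrite !winv_cat winvK catA.
rewrite Ha.
rewrite -!catA; apply: cat_proper => //.
rewrite !catA; apply: cat_proper => //.
apply: cat_proper => //; rewrite -catA.
transitivity (img g a ++ ([::] : word n)); last by rewrite cats0.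
apply: cat_proper => //; exact: catVl.
Qed.


Lemma conjK c W : eqw (winv c ++ (c ++ W ++ winv c) ++ c) W.
Proof.
rewrite !catA catVl /= -catA catVl cats0 //.
Qed.

Lemma reduced_winv s : reduced s -> reduced (winv s).
Proof.
rewrite /reduced /winv rev_sorted sorted_map => H.
rewrite (eq_sorted (e' := erel)) // => p q.
by rewrite /relpre /= /erel inv_letterK eq_sym.
Qed.

Lemma reduced_conj a b V : reduced (b :: V) -> a.1 != b.1 ->
  reduced (winv (b :: V) ++ a :: b :: V).
Proof.
move=> H ne; rewrite /reduced sorted_cat_cons.
have -> : rcons (winv (b :: V)) a = winv (inv_letter a :: b :: V).
  by rewrite [RHS]winv_cons inv_letterK cats1.
have Hab : b != a by apply: contraNneq ne => ->.
have Hab' : b != inv_letter a by apply: contraNneq ne => ->.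
move: H; rewrite /reduced /= => H.
rewrite /erel Hab' H andbT andbT.
have := @reduced_winv (inv_letter a :: b :: V).
by rewrite /reduced /= /erel inv_letterK Hab H; apply.
Qed.

Lemma wlen_eq (y : 'I_n -> word n) t u : is_basis y ->
  fnorm (weval y t) = fnorm u -> wlen y u = size (fnorm t).
Proof.
move=> [_ hy2] Ht.
have W : writable_len y u (size (fnorm t)).
  apply/existsP; exists (in_tuple (fnorm t)); apply/eqP => /=.
  by rewrite -Ht; symmetry; apply: weval_fnorm.
rewrite /wlen; case: excluded_middle_informative => [H|H]; last first.
  by exfalso; apply: H; exists (size (fnorm t)).
case: ex_minnP => k /existsP [tt /eqP Htt] hmin.
apply/eqP; rewrite eqn_leq; apply/andP; split; first exact: hmin.
have E : fnorm tt = fnorm t by apply: hy2; rewrite Htt Ht.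
by rewrite -E -{2}(size_tuple tt) size_fnorm.
Qed.

End F.

Theorem lemma2p3 (n : nat) (hn : 2 <= n) (x y w : 'I_n -> word n) (v : word n)
  (hx : is_basis x) (hy : is_basis y) (hw : is_basis w)
  (hv : forall i : 'I_n, fnorm (x i) = fnorm (v ++ w i ++ winv v)) :
  wlen y v <= (blen y w) ^ 2 * blen x y.
Proof.
set A := blen y w; set B := blen x y.
pose U0 i := proj1_sig (constructive_indefinite_description _ (hy.1 (w i))).
have HU0 i : fnorm (weval y (U0 i)) = fnorm (w i) := proj2_sig (constructive_indefinite_description _ (hy.1 (w i))).
pose Y0 i := proj1_sig (constructive_indefinite_description _ (hx.1 (y i))).
have HY0 i : fnorm (weval x (Y0 i)) = fnorm (y i) := proj2_sig (constructive_indefinite_description _ (hx.1 (y i))).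
pose U i := fnorm (U0 i).
pose Y i := fnorm (Y0 i).
have sU i : size (U i) <= A.
  rewrite /U -(wlen_eq hy (HU0 i)) /A /blen; exact: (@leq_bigmax _ (fun i => wlen y (w i)) i).
have sY i : size (Y i) <= B.
  rewrite /Y -(wlen_eq hx (HY0 i)); rewrite /B /blen; exact: (@leq_bigmax _ (fun i => wlen x (y i)) i).
have HU i : eqw (weval y (U i)) (w i).
  by rewrite /U -weval_fnorm; apply: HU0.
have HY i : eqw (weval x (Y i)) (y i).
  by rewrite /Y -weval_fnorm; apply: HY0.
case: (constructive_indefinite_description _ (hy.1 v)) => V0 HV0.
rewrite (wlen_eq hy HV0).
set V := fnorm V0.
have HV : eqw (weval y V) v by rewrite /V -weval_fnorm; apply: HV0.
have redV : reduced V by apply: fnorm_reduced.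
case EV : V redV HV => [|b V'] // redV HV.
have [j Hj] : exists j : 'I_n, b.1 != j.
  have h0 : 0 < n by apply: leq_trans hn.
  case: (eqVneq b.1 (Ordinal h0)) => [E|ne]; last by exists (Ordinal h0).
  by exists (Ordinal hn); rewrite E.
have key : eqw (weval y (winv (b :: V') ++ (j, false) :: b :: V'))
               (weval y (weval U (Y j))).
  rewrite weval_cat weval_winv [weval y ((j, false) :: _)]weval_cons !HV.
  rewrite [img _ _]/img /=.
  rewrite -(HY j) (weval_conj (g := w) (c := v) (Y j)); last by move=> i; apply: hv.
  rewrite conjK weval_comp.
  by apply: weval_ext => i; symmetry; apply: HU.
have E := hy.2 _ _ key.
have R := @reduced_conj n (j, false) b V' redV.
have {}R : reduced (winv (b :: V') ++ [:: (j, false), b & V']) by apply: R; rewrite /= eq_sym.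
rewrite (reduced_fnorm R) in E.
have S1 : size (b :: V') <= size (fnorm (weval U (Y j))).
  by rewrite -E size_cat /= -addSnnS leq_addl.
apply: (leq_trans S1); apply: (leq_trans (size_fnorm _)).
apply: (leq_trans (size_weval (Y j) sU)).
have := sY j; move: (size (Y j)) => k hk.
apply: (leq_trans (leq_mul hk (leqnn A))).
clear; case: A => [|a]; first by rewrite muln0.
by rewrite mulnC expnS -mulnA leq_pmull.
Qed.
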